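(* Let $\mathbf{a}$ be a CSCA and let $\xi\in\mathcal{P}^2$ be reflection invariant (both entries in $\mathcal{R}$) with $\gcd(\xi_+,\xi_-)=1$. For $t\in\mathbb{N}$ let $n(t,\xi)=\deg(\mathbf{a}^t\xi)$, so that the stabilizer generator $W(\mathbf{a}^t\xi)$ has length $2n(t,\xi)+1$. Then $$\lim_{t\to\infty}\frac{1}{t}n(t,\xi)=\deg(\mathrm{tr}\,\mathbf{a}).$$
   Context: $\mathcal{P}$ = Laurent polynomials in $u$ over $\mathbb{Z}_2$, $\mathcal{R}$ its subring of palindromes ($p(u^{-1})=p(u)$). A CSCA is a $2\times2$ matrix over $\mathcal{R}$ with determinant $1$. For a palindrome $p\in\mathcal{R}$, $\deg p$ is the highest exponent of $u$ occurring in $p$ (with $\deg p=0$ for constants, including $0$); for a vector of palindromes, $\deg$ is the maximum of the degrees of its entries. $W(\xi)$ denotes the tensor product of Pauli matrices labelled by $\xi$ (site $x$ carries $W(\xi_+(x),\xi_-(x))$ with $W(1,0)=\sigma_1$, $W(0,1)=\sigma_3$, $W(1,1)\propto\sigma_2$, $W(0,0)=\mathbb{1}$). *)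

(* Defs.v *)
From HB Require Import structures.
From mathcomp Require Import all_boot all_order all_algebra.
From mathcomp Require Import all_classical all_reals all_analysis.
Set Implicit Arguments. Unset Strict Implicit. Unset Printing Implicit Defensive.
Import Order.TTheory GRing.Theory Num.Theory.
Local Open Scope ring_scope.

(* A Laurent polynomial in u over Z_2, represented as u^(-lshift) * lpoly(u).
   Equality of Laurent polynomials is equality of all coefficients (leq). *)
Record laurent := Laurent { lshift : nat; lpoly : {poly 'F_2} }.

Definition lcoef (L : laurent) (k : int) : 'F_2 :=
  match (k + (lshift L)%:Z)%R with
  | Posz m => (lpoly L)`_m
  | Negz _ => 0
  end.

Definition leq (L M : laurent) : Prop := forall k : int, lcoef L k = lcoef M k.

Definition lzero : laurent := Laurent 0 0.
Definition lone : laurent := Laurent 0 1.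
Definition ladd (L M : laurent) : laurent :=
  Laurent (lshift L + lshift M)%N
          (lpoly L * 'X^(lshift M) + lpoly M * 'X^(lshift L)).
Definition lopp (L : laurent) : laurent := Laurent (lshift L) (- lpoly L).
Definition lsub (L M : laurent) : laurent := ladd L (lopp M).
Definition lmul (L M : laurent) : laurent :=
  Laurent (lshift L + lshift M)%N (lpoly L * lpoly M).

(* palindromes: p(u^{-1}) = p(u), i.e. coef(-k) = coef(k) *)
Definition palindrome (L : laurent) : Prop := forall k : int, lcoef L (- k) = lcoef L k.

(* highest exponent of u occurring in L; 0 for L = 0 *)
Definition ldeg (L : laurent) : int :=
  if lpoly L == 0 then 0 else ((size (lpoly L)).-1)%:Z - (lshift L)%:Z.

Definition ldvd (d x : laurent) : Prop := exists q, leq (lmul d q) x.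
Definition lunit (x : laurent) : Prop := exists y, leq (lmul x y) lone.
Definition lgcd_one (x y : laurent) : Prop :=
  forall d, ldvd d x -> ldvd d y -> lunit d.

(* 2x2 matrices over P, vectors in P^2 as pairs (xi_+, xi_-) *)
Definition lmat := 'M[laurent]_2.
Definition i0 : 'I_2 := ord0.
Definition i1 : 'I_2 := ord_max.

Definition CSCA (a : lmat) : Prop :=
  (forall i j, palindrome (a i j)) /\
  leq (lsub (lmul (a i0 i0) (a i1 i1)) (lmul (a i0 i1) (a i1 i0))) lone.

Definition ltr (a : lmat) : laurent := ladd (a i0 i0) (a i1 i1).

Definition lact (a : lmat) (v : laurent * laurent) : laurent * laurent :=
  (ladd (lmul (a i0 i0) v.1) (lmul (a i0 i1) v.2),
   ladd (lmul (a i1 i0) v.1) (lmul (a i1 i1) v.2)).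

Definition lpow_act (a : lmat) (t : nat) (v : laurent * laurent) := iter t (lact a) v.

Definition vdeg (v : laurent * laurent) : int := Num.max (ldeg v.1) (ldeg v.2).

Definition nlen (a : lmat) (xi : laurent * laurent) (t : nat) : int :=
  vdeg (lpow_act a t xi).

(* Main.v *)
Require Import Defs.
From HB Require Import structures.
From mathcomp Require Import all_boot all_order all_algebra.
From mathcomp Require Import all_classical all_reals all_analysis.
From mathcomp Require Import ring lra zify.
Import Defs.
Import Order.TTheory GRing.Theory Num.Theory numFieldNormedType.Exports.
Local Open Scope classical_set_scope.
Local Open Scope ring_scope.

Lemma lcoef_nat L m : lcoef L (m%:Z - (lshift L)%:Z) = (lpoly L)`_m.
Proof. by rewrite /lcoef subrK. Qed.

Lemma lcoef_neg L k : k + (lshift L)%:Z < 0 -> lcoef L k = 0.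
Proof. by rewrite /lcoef; case: (k + _). Qed.

Lemma int_cases (k : int) (s : nat) :
  (exists m : nat, k = m%:Z - s%:Z) \/ k + s%:Z < 0.
Proof.
case E: (k + s%:Z) => [m|m]; last by right.
by left; exists m; rewrite -E addrK.
Qed.

Lemma coefMX_lcoef L j m :
  (lpoly L * 'X^j)`_m = lcoef L (m%:Z - (lshift L)%:Z - j%:Z).
Proof.
rewrite coefMXn; case: ltnP => h.
  by rewrite lcoef_neg //; lia.
by rewrite -lcoef_nat; congr lcoef; lia.
Qed.

Lemma lcoef_add L M k : lcoef (ladd L M) k = lcoef L k + lcoef M k.
Proof.
case: (int_cases k (lshift L + lshift M)) => [[m ->]|h].
  rewrite (lcoef_nat (ladd L M)) /= coefD !coefMX_lcoef.
  by congr (lcoef _ _ + lcoef _ _); lia.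
rewrite !lcoef_neg ?addr0 // /=; lia.
Qed.

Lemma lcoef_nz L i : lcoef L i != 0 ->
  - (lshift L)%:Z <= i /\ i < (size (lpoly L))%:Z - (lshift L)%:Z.
Proof.
case: (int_cases i (lshift L)) => [[m ->]|h]; last by rewrite lcoef_neg ?eqxx.
rewrite lcoef_nat => nz.
have : (m < size (lpoly L))%N.
  by rewrite ltnNge; apply: contra nz => H; rewrite nth_default.
lia.
Qed.

Lemma pal_add L M : palindrome L -> palindrome M -> palindrome (ladd L M).
Proof. by move=> PL PM k; rewrite !lcoef_add PL PM. Qed.

Lemma sum_split (F : nat -> 'F_2) m n p : (m <= n)%N -> (n <= p)%N ->
  \sum_(m <= j < p) F j = \sum_(m <= j < n) F j + \sum_(n <= j < p) F j.
Proof. move=> h1 h2; exact: big_cat_nat. Qed.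

Definition ws (b : int) (n : nat) (f : int -> 'F_2) := \sum_(0 <= j < n) f (j%:Z + b).

Lemma ws_ext f b n b' n' : (forall i, f i != 0 -> b <= i < b + n%:Z) ->
  b' <= b -> b + n%:Z <= b' + n'%:Z -> ws b' n' f = ws b n f.
Proof.
move=> supp h1 h2.
pose e := `|b - b'|%N.
have eE : b = b' + e%:Z by rewrite /e; lia.
have ne : (e + n <= n')%N by lia.
rewrite /ws (@sum_split _ 0 e) ?leq0n //; last lia.
rewrite [X in X + _]big_nat_cond big1 ?add0r; last first.
  move=> j /andP[/andP[_ hj] _]; apply/eqP; apply: contraT => /supp H; exfalso; lia.
rewrite (@sum_split _ e (e + n)) ?leq_addr //.
rewrite [X in _ + X]big_nat_cond [X in _ + X]big1 ?addr0; last first.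
  move=> j /andP[/andP[hj _] _]; apply/eqP; apply: contraT => /supp H; exfalso; lia.
rewrite -{1}[e]add0n big_addn addKn.
by apply: eq_bigr => j _; congr f; lia.
Qed.

Lemma ws_refl S f : ws (- S%:Z) (2*S).+1 f = ws (- S%:Z) (2*S).+1 (fun i => f (- i)).
Proof.
rewrite /ws big_nat_rev /= [LHS]big_nat_cond [RHS]big_nat_cond.
by apply: eq_bigr => j /andP[/andP[_ hj] _]; congr f; lia.
Qed.

Definition cv L M k i := lcoef L i * lcoef M (k - i).

Lemma cv_nz L M k i : cv L M k i != 0 ->
  (- (lshift L)%:Z <= i /\ i < (size (lpoly L))%:Z - (lshift L)%:Z) /\
  (- (lshift M)%:Z <= k - i /\ k - i < (size (lpoly M))%:Z - (lshift M)%:Z).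
Proof. by rewrite mulf_eq0 negb_or => /andP[/lcoef_nz H1 /lcoef_nz H2]. Qed.

Lemma lcoef_mul_sum L M m :
  lcoef (lmul L M) (m%:Z - (lshift L + lshift M)%:Z) =
  ws (- (lshift L)%:Z) m.+1 (cv L M (m%:Z - (lshift L + lshift M)%:Z)).
Proof.
rewrite (lcoef_nat (lmul L M)) /= coefM /ws big_mkord.
apply: eq_bigr => [[j hj]] _ /=; rewrite /cv.
rewrite -(lcoef_nat L j) -(lcoef_nat M (m - j)).
by congr (lcoef _ _ * lcoef _ _); lia.
Qed.

Lemma lcoef_mul_ws L M k S : (lshift L <= S)%N -> (size (lpoly L) <= S)%N ->
  lcoef (lmul L M) k = ws (- S%:Z) (2*S).+1 (cv L M k).
Proof.
move=> hS1 hS2.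
case: (int_cases k (lshift L + lshift M)) => [[m ->]|h].
  have supp : forall i, cv L M (m%:Z - (lshift L + lshift M)%:Z) i != 0 ->
     - (lshift L)%:Z <= i < - (lshift L)%:Z + (minn m.+1 (size (lpoly L)))%:Z.
    by move=> i /cv_nz H; lia.
  rewrite lcoef_mul_sum (@ws_ext _ _ _ _ _ supp) ?lexx //; last lia.
  by apply: esym; apply: (@ws_ext _ _ _ _ _ supp); lia.
rewrite lcoef_neg /=; last lia.
rewrite /ws big1 // => j _; apply/eqP; apply: contraT => /cv_nz H; exfalso; lia.
Qed.

Lemma pal_mul L M : palindrome L -> palindrome M -> palindrome (lmul L M).
Proof.
move=> PL PM k.
rewrite !(@lcoef_mul_ws L M _ (lshift L + size (lpoly L))%N) ?leq_addr ?leq_addl //.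
rewrite ws_refl /ws; apply: eq_bigr => j _; rewrite /cv PL.
have -> : - k - - (j%:Z + - (lshift L + size (lpoly L))%:Z) = - (k - (j%:Z + - (lshift L + size (lpoly L))%:Z)) by ring.
by rewrite PM.
Qed.

Notation FF := {fraction {poly 'F_2}}.
Local Notation "x %:F" := (@FracField.tofrac _ x).
Definition phi (L : laurent) : FF := (lpoly L)%:F / ('X^(lshift L))%:F.

Lemma fadd (K : fieldType) (p q A B : K) : A != 0 -> B != 0 ->
  (p*B + q*A) / (A*B) = p/A + q/B.
Proof. by move=> hA hB; field; rewrite hA hB. Qed.
Lemma fmul (K : fieldType) (p q A B : K) : A != 0 -> B != 0 ->
  (p*q) / (A*B) = p/A * (q/B).
Proof. by move=> hA hB; field; rewrite hA hB. Qed.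
Lemma fcross (K : fieldType) (p q A B : K) : A != 0 -> B != 0 ->
  p / A = q / B -> p * B = q * A.
Proof.
move=> hA hB h.
have -> : p = p / A * A by rewrite mulfVK.
by rewrite h; field; rewrite hB.
Qed.
Lemma fcross' (K : fieldType) (p q A B : K) : A != 0 -> B != 0 ->
  p * B = q * A -> p / A = q / B.
Proof.
move=> hA hB h.
have -> : p / A = p * B / (A * B) by field; rewrite hA hB.
by rewrite h; field; rewrite hA hB.
Qed.

Lemma Xn_nzp n : ('X^n : {poly 'F_2}) != 0.
Proof. by rewrite expf_neq0 // polyX_eq0. Qed.

Lemma Xn_nz n : (('X^n : {poly 'F_2})%:F : FF) != 0.
Proof. by rewrite tofrac_eq0 Xn_nzp. Qed.

Lemma phi_add L M : phi (ladd L M) = phi L + phi M.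
Proof.
by rewrite /phi /= tofracD !tofracM exprD tofracM fadd ?Xn_nz.
Qed.

Lemma phi_mul L M : phi (lmul L M) = phi L * phi M.
Proof.
by rewrite /phi /= !tofracM exprD tofracM fmul ?Xn_nz.
Qed.

Lemma phi_opp L : phi (lopp L) = - phi L.
Proof. by rewrite /phi /= tofracN mulNr. Qed.

Lemma phi_sub L M : phi (lsub L M) = phi L - phi M.
Proof. by rewrite /lsub phi_add phi_opp. Qed.

Lemma phi_one : phi lone = 1.
Proof. by rewrite /phi /= expr0 tofrac1 divr1. Qed.

Lemma phi_eq L M : phi L = phi M ->
  lpoly L * 'X^(lshift M) = lpoly M * 'X^(lshift L).
Proof.
move=> h; apply/eqP; rewrite -tofrac_eq !tofracM; apply/eqP.
exact: fcross (Xn_nz _) (Xn_nz _) h.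
Qed.

Lemma leq_phi L M : leq L M -> phi L = phi M.
Proof.
move=> h.
have E : lpoly L * 'X^(lshift M) = lpoly M * 'X^(lshift L).
  apply/polyP => m; rewrite !coefMX_lcoef h; congr lcoef; lia.
apply: fcross' (Xn_nz _) (Xn_nz _) _.
by rewrite -!tofracM E.
Qed.

Lemma phi0 L : (phi L == 0) = (lpoly L == 0).
Proof. by rewrite /phi mulf_eq0 invr_eq0 (negbTE (Xn_nz _)) orbF tofrac_eq0. Qed.

Lemma ldeg_phi L M : phi L = phi M -> ldeg L = ldeg M.
Proof.
move=> /phi_eq E; rewrite /ldeg.
case: (eqVneq (lpoly L) 0) => [p0|pn0].
  move: E; rewrite p0 mul0r => /esym/eqP; rewrite mulf_eq0 (negbTE (Xn_nzp _)) orbF.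
  by move=> ->.
case: (eqVneq (lpoly M) 0) => [q0|qn0].
  by move: E; rewrite q0 mul0r => /eqP; rewrite mulf_eq0 (negbTE (Xn_nzp _)) orbF (negbTE pn0).
have := congr1 (fun p : {poly 'F_2} => size p) E; rewrite /= !size_mulXn //.
have := size_poly_gt0 (lpoly L); have := size_poly_gt0 (lpoly M).
rewrite (negbTE pn0) (negbTE qn0) /= -!subn1 => h1 h2 h3.
set a := size (lpoly L) in h1 h2 h3 *; set b := size (lpoly M) in h1 h2 h3 *; lia.
Qed.

Ltac slia :=
  repeat match goal with H : context [size _] |- _ => revert H end;
  rewrite -?subn1;
  repeat match goal with
  | |- context [size ?x] => let a := fresh "sz" in set a := size x; clearbody a
  end; intros; lia.

Lemma ldeg0 L : lpoly L = 0 -> ldeg L = 0.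
Proof. by rewrite /ldeg => ->; rewrite eqxx. Qed.

Lemma ldegE L : lpoly L != 0 -> ldeg L = (size (lpoly L)).-1%:Z - (lshift L)%:Z.
Proof. by rewrite /ldeg => /negbTE ->. Qed.

Lemma ldeg_mul L M : lpoly L != 0 -> lpoly M != 0 ->
  ldeg (lmul L M) = ldeg L + ldeg M.
Proof.
move=> pn0 qn0.
have pq : lpoly (lmul L M) != 0 by rewrite /= mulf_neq0.
rewrite !ldegE //= size_mul //.
have := size_poly_gt0 (lpoly L); have := size_poly_gt0 (lpoly M).
rewrite pn0 qn0 => h1 h2; slia.
Qed.

Lemma ldeg_mul_le L M : 0 <= ldeg L -> 0 <= ldeg M ->
  ldeg (lmul L M) <= ldeg L + ldeg M.
Proof.
move=> h1 h2.
case: (eqVneq (lpoly L) 0) => [p0|pn0].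
  rewrite ldeg0 /= ?p0 ?mul0r //; slia.
case: (eqVneq (lpoly M) 0) => [q0|qn0].
  rewrite ldeg0 /= ?q0 ?mulr0 //; slia.
by rewrite ldeg_mul.
Qed.

Lemma size_pX L j :
  (size (lpoly L * 'X^j))%:Z <= j%:Z + ldeg L + (lshift L)%:Z + 1.
Proof.
case: (eqVneq (lpoly L) 0) => [p0|pn0].
  rewrite p0 mul0r size_poly0 ldeg0 //; slia.
rewrite size_mulXn // ldegE //.
have := size_poly_gt0 (lpoly L); rewrite pn0 => h; slia.
Qed.

Lemma ldeg_add_le L M B : ldeg L <= B -> ldeg M <= B -> 0 <= B ->
  ldeg (ladd L M) <= B.
Proof.
move=> h1 h2 h3.
case: (eqVneq (lpoly (ladd L M)) 0) => [s0|sn0]; first by rewrite ldeg0.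
rewrite ldegE //.
have := size_poly_gt0 (lpoly (ladd L M)); rewrite sn0 /= => hs.
have := size_add (lpoly L * 'X^(lshift M)) (lpoly M * 'X^(lshift L)).
have := size_pX L (lshift M); have := size_pX M (lshift L).
move: hs; rewrite /=; slia.
Qed.

Lemma ldeg_add_gt L M : lpoly L != 0 -> ldeg M < ldeg L ->
  ldeg (ladd L M) = ldeg L /\ lpoly (ladd L M) != 0.
Proof.
move=> pn0 hlt.
have hs1 : size (lpoly L * 'X^(lshift M)) = (lshift M + size (lpoly L))%N.
  by rewrite size_mulXn.
have hs : size (lpoly (ladd L M)) = (lshift M + size (lpoly L))%N.
  rewrite /= size_addl; first exact: hs1.
  rewrite hs1.
  have := size_pX M (lshift L); move: hlt; rewrite (ldegE L pn0).
  have := size_poly_gt0 (lpoly L); rewrite pn0 => h; slia.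
have sn0 : lpoly (ladd L M) != 0.
  by rewrite -size_poly_gt0 hs; have := size_poly_gt0 (lpoly L); rewrite pn0; slia.
split => //; rewrite !ldegE // hs /=.
have := size_poly_gt0 (lpoly L); rewrite pn0 => h; slia.
Qed.

Lemma pal_ldeg_ge0 L : palindrome L -> 0 <= ldeg L.
Proof.
move=> PL.
case: (eqVneq (lpoly L) 0) => [p0|pn0]; first by rewrite ldeg0.
have h1 : lcoef L (ldeg L) != 0.
  rewrite ldegE // -[(size (lpoly L)).-1%:Z]/(((size (lpoly L)).-1)%:Z) lcoef_nat.
  by rewrite -lead_coefE lead_coef_eq0.
rewrite -PL in h1; move/lcoef_nz: h1; rewrite ldegE //.
have := size_poly_gt0 (lpoly L); rewrite pn0 => h; slia.
Qed.

Lemma two0 : (2%:R : FF) = 0.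
Proof.
have h : (2%:R : 'F_2) = 0 by apply/eqP.
have -> : (2%:R : FF) = (2%:R : {poly 'F_2})%:F by rewrite tofracMn tofrac1.
by rewrite -polyC_natr h polyC0 tofrac0.
Qed.

Lemma CH_abs1 (K : comRingType) (a b c d x y : K) : a*d - b*c = 1 -> 2%:R = 0 :> K ->
  a*(a*x + b*y) + b*(c*x + d*y) = (a + d)*(a*x + b*y) + x.
Proof.
move=> h h2; apply/eqP; rewrite -subr_eq0.
have -> : a*(a*x + b*y) + b*(c*x + d*y) - ((a + d)*(a*x + b*y) + x) =
  - x * (a*d - b*c) - x * 2%:R + x by ring.
by rewrite h h2; apply/eqP; ring.
Qed.

Lemma CH_abs2 (K : comRingType) (a b c d x y : K) : a*d - b*c = 1 -> 2%:R = 0 :> K ->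
  c*(a*x + b*y) + d*(c*x + d*y) = (a + d)*(c*x + d*y) + y.
Proof.
move=> h h2; apply/eqP; rewrite -subr_eq0.
have -> : c*(a*x + b*y) + d*(c*x + d*y) - ((a + d)*(c*x + d*y) + y) =
  - y * (a*d - b*c) - y * 2%:R + y by ring.
by rewrite h h2; apply/eqP; ring.
Qed.

Lemma inj_abs (K : comRingType) (a b c d x y : K) : a*d - b*c = 1 ->
  a*x + b*y = 0 -> c*x + d*y = 0 -> x = 0 /\ y = 0.
Proof.
move=> h h1 h2; split.
  have -> : x = d*(a*x + b*y) - b*(c*x + d*y) + x * (1 - (a*d - b*c)) by ring.
  by rewrite h1 h2 h; ring.
have -> : y = a*(c*x + d*y) - c*(a*x + b*y) + y * (1 - (a*d - b*c)) by ring.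
by rewrite h1 h2 h; ring.
Qed.

Lemma det_phi a : CSCA a ->
  phi (a i0 i0) * phi (a i1 i1) - phi (a i0 i1) * phi (a i1 i0) = 1.
Proof. by case=> _ /leq_phi; rewrite phi_sub !phi_mul phi_one. Qed.

Lemma CH1 a v : CSCA a ->
  phi (lact a (lact a v)).1 = phi (ltr a) * phi (lact a v).1 + phi v.1.
Proof.
move=> Ha; rewrite /lact /ltr /= !(phi_add, phi_mul).
exact: CH_abs1 (det_phi _ Ha) two0.
Qed.

Lemma CH2 a v : CSCA a ->
  phi (lact a (lact a v)).2 = phi (ltr a) * phi (lact a v).2 + phi v.2.
Proof.
move=> Ha; rewrite /lact /ltr /= !(phi_add, phi_mul).
exact: CH_abs2 (det_phi _ Ha) two0.
Qed.

Definition vnz (v : laurent * laurent) := ~ (phi v.1 = 0 /\ phi v.2 = 0).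

Lemma lact_nz a v : CSCA a -> vnz v -> vnz (lact a v).
Proof.
move=> Ha nz [h1 h2]; apply: nz.
move: h1 h2; rewrite /lact /= !(phi_add, phi_mul).
exact: inj_abs (det_phi _ Ha).
Qed.

Lemma E_nz a xi t : CSCA a -> vnz xi -> vnz (lpow_act a t xi).
Proof. by move=> Ha nz; elim: t => //= t IH; apply: lact_nz. Qed.

Lemma pal_lact a v : CSCA a -> palindrome v.1 -> palindrome v.2 ->
  palindrome (lact a v).1 /\ palindrome (lact a v).2.
Proof.
case=> Pa _ P1 P2; split; rewrite /lact /=; apply: pal_add; apply: pal_mul => //.
Qed.

Lemma E_pal a xi t : CSCA a -> palindrome xi.1 -> palindrome xi.2 ->
  palindrome (lpow_act a t xi).1 /\ palindrome (lpow_act a t xi).2.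
Proof.
move=> Ha P1 P2; elim: t => [//|t [Q1 Q2]] /=.
exact: pal_lact.
Qed.

Lemma lcoef_zero L k : lpoly L = 0 -> lcoef L k = 0.
Proof. by move=> h; rewrite /lcoef; case: (_ + _) => // m; rewrite h coef0. Qed.

Lemma xi_nz xi : lgcd_one xi.1 xi.2 -> vnz xi.
Proof.
move=> G [h1 h2].
pose d := Laurent 0 ('X + 1).
have hd : forall L, phi L = 0 -> ldvd d L.
  move=> L /eqP; rewrite phi0 => /eqP hL; exists lzero => k.
  by rewrite !lcoef_zero //= mulr0.
have [y /leq_phi] := G d (hd _ h1) (hd _ h2).
move/phi_eq => /(congr1 (fun p : {poly 'F_2} => p.[1])) /=.
rewrite expr0 mulr1 mul1r hornerXn expr1n hornerM hornerD hornerX hornerC.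
have -> : (1 + 1 : 'F_2) = 0 by apply/eqP.
by rewrite mul0r => /eqP; rewrite eq_sym oner_eq0.
Qed.

Lemma comp_le T X Y B : 0 <= ldeg T -> 0 <= ldeg X -> 0 <= ldeg Y ->
  ldeg T + ldeg X <= B -> ldeg Y <= B -> ldeg (ladd (lmul T X) Y) <= B.
Proof.
move=> g1 g2 g3 h1 h2; apply: ldeg_add_le => //.
  exact: le_trans (ldeg_mul_le _ _ g1 g2) h1.
exact: le_trans g3 h2.
Qed.

Lemma comp_eq T X Y : lpoly T != 0 -> lpoly X != 0 ->
  ldeg Y < ldeg T + ldeg X -> ldeg (ladd (lmul T X) Y) = ldeg T + ldeg X.
Proof.
move=> n1 n2 h.
have nTX : lpoly (lmul T X) != 0 by rewrite /= mulf_neq0.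
have := ldeg_add_gt _ Y nTX; rewrite ldeg_mul // => /(_ h) [-> _] //.
Qed.

Lemma pal_ltr a : CSCA a -> palindrome (ltr a).
Proof. by case=> Pa _; apply: pal_add. Qed.

Lemma step1 a xi t : CSCA a -> ldeg (lpow_act a t.+2 xi).1 =
  ldeg (ladd (lmul (ltr a) (lpow_act a t.+1 xi).1) (lpow_act a t xi).1).
Proof.
move=> Ha; apply: ldeg_phi; rewrite phi_add phi_mul.
exact: (CH1 a (lpow_act a t xi) Ha).
Qed.

Lemma step2 a xi t : CSCA a -> ldeg (lpow_act a t.+2 xi).2 =
  ldeg (ladd (lmul (ltr a) (lpow_act a t.+1 xi).2) (lpow_act a t xi).2).
Proof.
move=> Ha; apply: ldeg_phi; rewrite phi_add phi_mul.
exact: (CH2 a (lpow_act a t xi) Ha).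
Qed.

Lemma nlen_ge0 a xi t : CSCA a -> palindrome xi.1 -> palindrome xi.2 -> 0 <= nlen a xi t.
Proof.
move=> Ha P1 P2; have [Q1 Q2] := E_pal a xi t Ha P1 P2.
by rewrite /nlen /vdeg le_max pal_ldeg_ge0.
Qed.

Lemma D_le a xi t B : CSCA a -> palindrome xi.1 -> palindrome xi.2 ->
  ldeg (ltr a) + nlen a xi t.+1 <= B -> nlen a xi t <= B -> nlen a xi t.+2 <= B.
Proof.
move=> Ha P1 P2.
have g0 := pal_ldeg_ge0 _ (pal_ltr _ Ha).
have [Q1 Q2] := E_pal a xi t Ha P1 P2.
have [R1 R2] := E_pal a xi t.+1 Ha P1 P2.
rewrite /nlen /vdeg => h1 h2.
rewrite ge_max; apply/andP; split.
  rewrite step1 //; apply: comp_le; rewrite ?g0 ?pal_ldeg_ge0 //.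
    by apply: le_trans h1; rewrite lerD2l le_max lexx.
  by apply: le_trans h2; rewrite le_max lexx.
rewrite step2 //; apply: comp_le; rewrite ?g0 ?pal_ldeg_ge0 //.
  by apply: le_trans h1; rewrite lerD2l le_max lexx orbT.
by apply: le_trans h2; rewrite le_max lexx orbT.
Qed.

Lemma pick_comp v : palindrome v.1 -> palindrome v.2 -> vnz v ->
  (lpoly v.1 != 0 /\ ldeg v.1 = vdeg v) \/ (lpoly v.2 != 0 /\ ldeg v.2 = vdeg v).
Proof.
move=> P1 P2 nz; rewrite /vdeg.
have g1 := pal_ldeg_ge0 _ P1; have g2 := pal_ldeg_ge0 _ P2.
have nz' : lpoly v.1 != 0 \/ lpoly v.2 != 0.
  case: (eqVneq (lpoly v.1) 0) => [z1|]; last by left.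
  case: (eqVneq (lpoly v.2) 0) => [z2|]; last by right.
  by exfalso; apply: nz; split; apply/eqP; rewrite phi0; apply/eqP.
case: leP => h.
  case: (eqVneq (lpoly v.2) 0) => [z2|n2]; last by right.
  case: nz' => [n1|]; last by rewrite z2 eqxx.
  left; split => //; rewrite (ldeg0 _ z2) in h *; lia.
case: (eqVneq (lpoly v.1) 0) => [z1|n1]; last by left.
by rewrite (ldeg0 _ z1) in h; exfalso; lia.
Qed.

Lemma D_eq a xi t : CSCA a -> palindrome xi.1 -> palindrome xi.2 -> vnz xi ->
  lpoly (ltr a) != 0 ->
  nlen a xi t < ldeg (ltr a) + nlen a xi t.+1 ->
  nlen a xi t.+2 = ldeg (ltr a) + nlen a xi t.+1.
Proof.
move=> Ha P1 P2 nz nT h.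
apply/le_anti/andP; split.
  by apply: D_le => //; apply: ltW.
have [Q1 Q2] := E_pal a xi t Ha P1 P2.
have [R1 R2] := E_pal a xi t.+1 Ha P1 P2.
have := pick_comp _ R1 R2 (E_nz a xi t.+1 Ha nz).
rewrite /nlen /vdeg in h *; rewrite le_max.
case=> [[n1 e1]|[n2 e2]].
  apply/orP; left; rewrite (step1 _ _ _ Ha) (comp_eq _ _ _ nT n1); first by rewrite -e1 lexx.
  rewrite e1; apply: le_lt_trans h; by rewrite le_max lexx.
apply/orP; right; rewrite (step2 _ _ _ Ha) (comp_eq _ _ _ nT n2); first by rewrite -e2 lexx.
rewrite e2; apply: le_lt_trans h; by rewrite le_max lexx orbT.
Qed.

Lemma seq_lin (D : nat -> int) (d : int) :
  (forall t, 0 <= D t) ->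
  (forall t B, d + D t.+1 <= B -> D t <= B -> D t.+2 <= B) ->
  (0 < d -> forall t, D t < d + D t.+1 -> D t.+2 = d + D t.+1) ->
  0 <= d ->
  exists K, exists T, forall t, (T <= t)%N -> `|D t - d * t%:Z| <= K.
Proof.
move=> H0 Hle Heq d0.
case: (eqVneq d 0) => [d00|dn0].
  exists (Num.max (D 0%N) (D 1%N)), 0%N => t _.
  rewrite d00 mul0r subr0 ger0_norm //.
  suff: forall t, D t <= Num.max (D 0%N) (D 1%N) /\ D t.+1 <= Num.max (D 0%N) (D 1%N).
    by case/(_ t).
  elim=> [|n [h1 h2]]; first by split; rewrite le_max lexx ?orbT.
  split => //; apply: Hle => //; rewrite d00 add0r //.
have dpos : 0 < d by rewrite lt_def dn0 d0.
have ex : exists t0, D t0 < d + D t0.+1.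
  have claim : forall n, (exists t0, D t0 < d + D t0.+1) \/ D n <= D 0%N - n%:Z.
    elim=> [|n [|IH]]; [right; lia| by left|].
    case: (ltP (D n) (d + D n.+1)) => h; [left; exists n => // | right; lia].
  case: (claim (`|D 0%N|%N).+1) => // h; exfalso.
  have := H0 (`|D 0%N|%N).+1; have := H0 0%N; lia.
case: ex => t0 h0.
have lin : forall j, D (t0 + j)%N.+1 = D t0.+1 + j%:Z * d /\ D (t0 + j)%N < d + D (t0 + j)%N.+1.
  elim=> [|j [e1 e2]]; first by rewrite !addn0; split => //; lia.
  have e3 := Heq dpos _ e2.
  rewrite !addnS e3 e1; split; first by rewrite -[j.+1]addn1 PoszD; ring.
  lia.
exists `|D t0.+1 - d * (t0.+1)%:Z|, t0.+1 => t ht.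
have [j ->] : exists j, t = (t0 + j)%N.+1 by exists (t - t0.+1)%N; lia.
rewrite (lin j).1.
suff -> : D t0.+1 + j%:Z * d - d * ((t0 + j)%N.+1)%:Z = D t0.+1 - d * (t0.+1)%:Z by [].
rewrite -[(t0 + j)%N.+1]addn1 -[t0.+1]addn1 !PoszD; ring.
Qed.

Lemma cvg_lin (R : realType) (D : nat -> int) (d K : int) (T : nat) :
 (forall t, (T <= t)%N -> `|D t - d * t%:Z| <= K) ->
 (fun t : nat => (D t)%:~R / t%:R : R) @ \oo --> (d%:~R : R).
Proof.
move=> HK; apply/cvgrPdist_lt => e e0.
near=> t.
have tT : (T <= t)%N by near: t; exact: nbhs_infty_ge.
have tK : (K%:~R / e < t%:R :> R) by near: t; exact: nbhs_infty_gtr.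
have t0 : (0 < t)%N by near: t; exact: nbhs_infty_gt.
have t0' : (0 < t%:R :> R) by rewrite ltr0n.
have -> : (d%:~R - (D t)%:~R / t%:R : R) = ((d * t%:Z - D t)%:~R) / t%:R.
  rewrite intrB intrM -pmulrn; field; lra.
rewrite normrM normfV [`|t%:R|]ger0_norm ?ler0n // -intr_norm distrC.
rewrite ltr_pdivrMr //.
apply: le_lt_trans (_ : K%:~R < _).
  by rewrite ler_int HK.
by rewrite -ltr_pdivrMl // mulrC.
Unshelve. all: by end_near.
Qed.

Theorem mainTheorem16 (R : realType) (a : lmat) (xi : laurent * laurent) :
  CSCA a -> palindrome xi.1 -> palindrome xi.2 -> lgcd_one xi.1 xi.2 ->
  (fun t : nat => ((nlen a xi t)%:~R / t%:R : R)) @ \oo --> ((ldeg (ltr a))%:~R : R).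
Proof.
move=> Ha P1 P2 G.
have nz := xi_nz _ G.
have d0 := pal_ldeg_ge0 _ (pal_ltr _ Ha).
have H3 : 0 < ldeg (ltr a) -> forall t, nlen a xi t < ldeg (ltr a) + nlen a xi t.+1 ->
    nlen a xi t.+2 = ldeg (ltr a) + nlen a xi t.+1.
  move=> dpos t; apply: D_eq => //.
  by apply/negP => /eqP /ldeg0 z; rewrite z ltxx in dpos.
have [K [T HK]] := @seq_lin (nlen a xi) (ldeg (ltr a))
  (fun t => nlen_ge0 a xi t Ha P1 P2) (fun t B => @D_le a xi t B Ha P1 P2) H3 d0.
exact: cvg_lin HK.
Qed.
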